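(* Let $a,b,c$ be positive integers such that $abc$ is not a cube in $\mathbb{Z}$. Then there exists $\lambda\in\{a/b,\,b/c,\,c/a\}$ such that $\mathbb{Q}(\sqrt[3]{abc})\neq\mathbb{Q}(\sqrt[3]{\lambda})$.
   Context: $\sqrt[3]{\cdot}$ denotes the real cube root, so these are subfields of $\mathbb{R}$. *)

(* Defs.v *)
From Stdlib Require Import Reals ZArith.
Open Scope R_scope.

Definition cbrt (x : R) : R :=
  match Rle_dec 0 x with
  | left _ => match Req_EM_T x 0 with
              | left _ => 0
              | right _ => Rpower x (/ 3)
              end
  | right _ => - Rpower (- x) (/ 3)
  end.

Definition is_subfield (S : R -> Prop) : Prop :=
  S 0 /\ S 1 /\
  (forall x y, S x -> S y -> S (x + y)) /\
  (forall x, S x -> S (- x)) /\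
  (forall x y, S x -> S y -> S (x * y)) /\
  (forall x, S x -> x <> 0 -> S (/ x)).

Definition Qadj (x : R) : R -> Prop :=
  fun y => forall S, is_subfield S -> S x -> S y.

(* Main.v *)
Require Import Defs.
From Stdlib Require Import Reals ZArith QArith Qreals Znumtheory Lra Lia Psatz.
Open Scope R_scope.

Definition isQ (x : R) : Prop := exists q : Q, x = Q2R q.

Lemma isQ_plus x y : isQ x -> isQ y -> isQ (x + y).
Proof. intros [a ->] [b ->]. exists (a + b)%Q. now rewrite Q2R_plus. Qed.
Lemma isQ_mult x y : isQ x -> isQ y -> isQ (x * y).
Proof. intros [a ->] [b ->]. exists (a * b)%Q. now rewrite Q2R_mult. Qed.
Lemma isQ_opp x : isQ x -> isQ (- x).
Proof. intros [a ->]. exists (- a)%Q. now rewrite Q2R_opp. Qed.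
Lemma isQ_inv x : isQ x -> x <> 0 -> isQ (/ x).
Proof.
  intros [a ->] H. exists (/ a)%Q. rewrite Q2R_inv; auto.
  intro E. apply H. rewrite (Qeq_eqR _ _ E). unfold Q2R. simpl. field.
Qed.
Lemma isQ_IZR z : isQ (IZR z).
Proof. exists (inject_Z z). unfold Q2R. simpl. field. Qed.
Lemma isQ_0 : isQ 0. Proof. apply (isQ_IZR 0). Qed.
Lemma isQ_1 : isQ 1. Proof. apply (isQ_IZR 1). Qed.
Lemma isQ_minus x y : isQ x -> isQ y -> isQ (x - y).
Proof. intros; apply isQ_plus; auto; apply isQ_opp; auto. Qed.
Lemma isQ_div x y : isQ x -> isQ y -> y <> 0 -> isQ (x / y).
Proof. intros; apply isQ_mult; auto; apply isQ_inv; auto. Qed.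
Lemma isQ_pow x k : isQ x -> isQ (x ^ k).
Proof. intros H; induction k; simpl; [apply isQ_1| apply isQ_mult; auto]. Qed.

Lemma isQ_subfield : is_subfield isQ.
Proof.
  repeat split; auto using isQ_0, isQ_1, isQ_plus, isQ_opp, isQ_mult, isQ_inv.
Qed.

Lemma cbrt_cube x : cbrt x ^ 3 = x.
Proof.
  assert (K : forall y, 0 < y -> Rpower y (/3) ^ 3 = y).
  { intros y Hy. rewrite <- Rpower_pow by (apply exp_pos).
    rewrite Rpower_mult. replace (/3 * INR 3) with 1 by (simpl; field).
    now apply Rpower_1. }
  unfold cbrt. destruct (Rle_dec 0 x).
  - destruct (Req_EM_T x 0). subst; ring. apply K; lra.
  - replace ((- Rpower (- x) (/ 3)) ^ 3) with (- (Rpower (-x) (/3) ^3)) by ring.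
    rewrite K; lra.
Qed.

Lemma cube_inj x y : x ^ 3 = y ^ 3 -> x = y.
Proof.
  intros H.
  assert (E : (x - y) * ((x + y/2)^2 + 3/4 * y^2) = 0).
  { replace ((x - y) * ((x + y/2)^2 + 3/4 * y^2)) with (x^3 - y^3) by field. lra. }
  apply Rmult_integral in E. destruct E as [E|E]. lra.
  assert (0 <= (x + y/2)^2) by nra. assert (0 <= y^2) by nra.
  assert (y^2 = 0) by lra. assert (y = 0) by nra. subst. nra.
Qed.

Lemma cbrt_unique x y : y ^ 3 = x -> cbrt x = y.
Proof. intros H. apply cube_inj. rewrite cbrt_cube. auto. Qed.

Lemma Z_cube (N u v : Z) : (0 < v)%Z -> (N * (v*v*v) = u*u*u)%Z -> exists z, (z*z*z = N)%Z.
Proof.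
  intros Hv H.
  set (g := Z.gcd u v).
  assert (Hg : (0 < g)%Z).
  { assert (0 <= g)%Z by apply Z.gcd_nonneg.
    assert (g <> 0)%Z. { intro E. apply Z.gcd_eq_0 in E. lia. } lia. }
  destruct (Z.gcd_divide_l u v) as [u' Hu]. destruct (Z.gcd_divide_r u v) as [v' Hv'].
  fold g in Hu, Hv'.
  assert (Hc : Z.gcd u' v' = 1%Z).
  { assert (u' = u / g)%Z by (rewrite Hu; rewrite Z.div_mul; lia).
    assert (v' = v / g)%Z by (rewrite Hv'; rewrite Z.div_mul; lia).
    subst u' v'. apply Z.gcd_div_gcd; auto. lia. }
  assert (H2 : (N * (v'*v'*v') = u'*u'*u')%Z).
  { assert (0 < g*g*g)%Z by (repeat apply Z.mul_pos_pos; lia).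
    apply (Z.mul_reg_l _ _ (g*g*g)). lia. rewrite Hu, Hv' in H.
    replace (g*g*g*(N*(v'*v'*v')))%Z with (N*((v'*g)*(v'*g)*(v'*g)))%Z by ring. rewrite H. ring. }
  assert (Hd : (v' | u' * (u' * u'))%Z). { exists (N*v'*v')%Z. rewrite Z.mul_assoc, <- H2. ring. }
  rewrite Z.gcd_comm in Hc.
  apply Z.gauss in Hd; auto. apply Z.gauss in Hd; auto.
  assert (Hd1 : (v' | 1)%Z). { rewrite <- Hc. apply Z.gcd_greatest; auto. apply Z.divide_refl. }
  assert (v' = 1)%Z. { apply Z.divide_1_r in Hd1. nia. }
  subst v'. exists u'. lia.
Qed.

Lemma noncube_Q (N : Z) : ~ (exists z, (z*z*z = N)%Z) -> ~ exists s, isQ s /\ IZR N = s ^ 3.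
Proof.
  intros Hn [s [[q ->] Hs]]. apply Hn. destruct q as [u v].
  apply (Z_cube N u (Z.pos v)). lia.
  apply eq_IZR. rewrite !mult_IZR. unfold Q2R in Hs. simpl in Hs. rewrite Hs.
  field. apply not_0_IZR. lia.
Qed.

Lemma pow_eq_zero_0 x k : x ^ k = 0 -> x = 0.
Proof. intros H. destruct (Req_dec x 0); auto. exfalso. apply (pow_nonzero x k); auto. Qed.

Ltac qauto := repeat first [assumption | apply isQ_IZR | apply isQ_minus | apply isQ_plus | apply isQ_opp | apply isQ_pow | apply isQ_mult].
Definition NC (n : R) : Prop := ~ exists s, isQ s /\ n = s ^ 3.

Lemma theta_irr t n : t ^ 3 = n -> NC n -> ~ isQ t.
Proof. intros H Hn Ht. apply Hn. exists t. auto. Qed.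

Lemma n_nz n : NC n -> n <> 0.
Proof. intros Hn E. apply Hn. exists 0. split. apply isQ_0. subst. ring. Qed.

Lemma indep t n p q r : t ^ 3 = n -> isQ n -> NC n -> isQ p -> isQ q -> isQ r ->
  p + q * t + r * t ^ 2 = 0 -> p = 0 /\ q = 0 /\ r = 0.
Proof.
  intros Ht Qn Hn Qp Qq Qr E.
  assert (Hr : r = 0).
  { destruct (Req_dec r 0) as [|Hr]; auto. exfalso.
    assert (E2 : (r*p - q^2) * t + (r^2 * n - p*q) = 0).
    { rewrite <- Ht. replace ((r*p - q^2) * t + (r^2 * t^3 - p*q)) with
        (r * t * (p + q * t + r * t ^ 2) - q * (p + q * t + r * t ^ 2)) by ring.
      rewrite E. ring. }
    destruct (Req_dec (r*p - q^2) 0) as [D|D].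
    - apply Hn. exists (q / r). split. apply isQ_div; auto.
      assert (Hp : p = q^2 / r). { field_simplify_eq; auto. lra. }
      assert (H2 : r^2 * n = p * q) by (rewrite D in E2; lra).
      apply (Rmult_eq_reg_l (r^2)). 2: apply pow_nonzero; auto.
      rewrite H2, Hp. field. auto.
    - apply (theta_irr t n); auto.
      assert (Ht2 : t = (p*q - r^2*n) / (r*p - q^2)). { field_simplify_eq; auto. lra. }
      rewrite Ht2.
      apply isQ_div; auto. apply isQ_minus; apply isQ_mult; auto. apply isQ_pow; auto.
      apply isQ_minus. apply isQ_mult; auto. apply isQ_pow; auto. }
  subst r.
  destruct (Req_dec q 0) as [Hq|Hq].
  - subst. split; [lra|]. split; auto.
  - exfalso. apply (theta_irr t n); auto.
    assert (Ht2 : t = - p / q). { field_simplify_eq; auto. lra. }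
    rewrite Ht2. apply isQ_div; auto. apply isQ_opp; auto.
Qed.

Definition S (t : R) (y : R) : Prop :=
  exists p q r, isQ p /\ isQ q /\ isQ r /\ y = p + q * t + r * t ^ 2.

Lemma S_subfield t n : t ^ 3 = n -> isQ n -> NC n -> is_subfield (S t).
Proof.
  intros Ht Qn Hn.
  assert (tnz : t <> 0). { intro E. apply (n_nz n Hn). rewrite <- Ht, E. ring. }
  repeat split.
  - exists 0, 0, 0. repeat split; try apply isQ_0. ring.
  - exists 1, 0, 0. repeat split; try apply isQ_0; try apply isQ_1. ring.
  - intros x y [p [q [r [Qp [Qq [Qr ->]]]]]] [p' [q' [r' [Qp' [Qq' [Qr' ->]]]]]].
    exists (p+p'), (q+q'), (r+r'). repeat split; try apply isQ_plus; auto. ring.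
  - intros x [p [q [r [Qp [Qq [Qr ->]]]]]].
    exists (-p), (-q), (-r). repeat split; try apply isQ_opp; auto. ring.
  - intros x y [p [q [r [Qp [Qq [Qr ->]]]]]] [p' [q' [r' [Qp' [Qq' [Qr' ->]]]]]].
    exists (p*p' + n*(q*r'+r*q')), (p*q'+q*p'+n*(r*r')), (p*r'+q*q'+r*p').
    repeat split;
      qauto.
    rewrite <- Ht. ring.
  - intros x [p [q [r [Qp [Qq [Qr ->]]]]]] Hu.
    set (u := p + q * t + r * t ^ 2) in *.
    set (N := p^3 + n*q^3 + n^2*r^3 - 3*n*p*q*r).
    assert (Hcof : u * ((p^2 - n*q*r) + (n*r^2 - p*q) * t + (q^2 - p*r) * t^2) = N).
    { unfold u, N. rewrite <- Ht. ring. }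
    assert (HN : N <> 0).
    { intro E0.
      assert (Hsq : 2 * N = u * ((p - q*t)^2 + (q*t - r*t^2)^2 + (r*t^2 - p)^2)).
      { unfold u, N. rewrite <- Ht. ring. }
      rewrite E0 in Hsq.
      assert (Z0 : (p - q*t)^2 + (q*t - r*t^2)^2 + (r*t^2 - p)^2 = 0).
      { apply (Rmult_eq_reg_l u); auto. lra. }
      assert (G1 := pow2_ge_0 (p - q*t)). assert (G2 := pow2_ge_0 (q*t - r*t^2)).
      assert (G3 := pow2_ge_0 (r*t^2 - p)).
      assert (A1 : (p - q*t)^2 = 0) by lra.
      assert (A2 : (q*t - r*t^2)^2 = 0) by lra.
      assert (B1 : p - q*t = 0) by (apply (pow_eq_zero_0 _ 2); auto).
      assert (B2 : q*t - r*t^2 = 0) by (apply (pow_eq_zero_0 _ 2); auto).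
      destruct (Req_dec q 0) as [Hq|Hq].
      - subst q. assert (p = 0) by lra. assert (r * t^2 = 0) by lra.
        assert (r = 0). { apply Rmult_integral in H0. destruct H0; auto.
          exfalso; apply tnz. apply (pow_eq_zero_0 t 2). auto. }
        apply Hu. unfold u. subst. ring.
      - apply (theta_irr t n); auto.
        replace t with (p / q) by (field_simplify_eq; auto; lra).
        apply isQ_div; auto. }
    exists ((p^2 - n*q*r)/N), ((n*r^2 - p*q)/N), ((q^2 - p*r)/N).
    assert (QN : isQ N).
    { unfold N. qauto. }
    repeat split; try (apply isQ_div; auto; qauto).
    apply (Rmult_eq_reg_l u); auto. rewrite Rinv_r; auto.
    replace (u * ((p ^ 2 - n * q * r) / N + (n * r ^ 2 - p * q) / N * t + (q ^ 2 - p * r) / N * t ^ 2))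
      with (u * ((p^2 - n*q*r) + (n*r^2 - p*q) * t + (q^2 - p*r) * t^2) / N) by (field; auto).
    rewrite Hcof. field. auto.
Qed.

Lemma classify t n b m : t ^ 3 = n -> isQ n -> NC n -> S t b -> isQ m -> b ^ 3 = m ->
  exists s, isQ s /\ (b = s \/ b = s * t \/ b = s * t ^ 2).
Proof.
  intros Ht Qn Hn [p [q [r [Qp [Qq [Qr ->]]]]]] Qm Hb.
  assert (nnz := n_nz n Hn).
  set (A := p^3 + n*q^3 + n^2*r^3 + 6*n*p*q*r - m).
  set (B := 3*(p^2*q + n*q^2*r + n*p*r^2)).
  set (C := 3*(p^2*r + p*q^2 + n*q*r^2)).
  assert (E : A + B * t + C * t^2 = 0).
  { unfold A, B, C. rewrite <- Hb. rewrite <- Ht. ring. }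
  destruct (indep t n A B C Ht Qn Hn) as [_ [HB HC]]; auto.
  - unfold A. qauto.
  - unfold B. qauto.
  - unfold C. qauto.
  - unfold B in HB. unfold C in HC.
    assert (HB' : p^2*q + n*q^2*r + n*p*r^2 = 0) by lra.
    assert (HC' : p^2*r + p*q^2 + n*q*r^2 = 0) by lra.
    destruct (Req_dec p 0) as [Hp|Hp].
    { subst p. assert (n * (q^2 * r) = 0) by lra.
      apply Rmult_integral in H. destruct H as [H|H]; [contradiction|].
      apply Rmult_integral in H. destruct H as [H|H].
      - assert (q = 0) by (apply (pow_eq_zero_0 q 2); auto). subst q.
        exists r. split; auto. right; right. ring.
      - subst r. exists q. split; auto. right; left. ring. }
    destruct (Req_dec q 0) as [Hq|Hq].
    { subst q. assert (n * p * (r^2) = 0) by lra.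
      apply Rmult_integral in H. destruct H as [H|H].
      - apply Rmult_integral in H. destruct H; contradiction.
      - assert (r = 0) by (apply (pow_eq_zero_0 r 2); auto). subst r.
        exists p. split; auto. left. ring. }
    destruct (Req_dec r 0) as [Hr|Hr].
    { subst r. assert (p * q^2 = 0) by lra.
      apply Rmult_integral in H. destruct H as [H|H]; [contradiction|].
      exfalso. apply Hq. apply (pow_eq_zero_0 q 2); auto. }
    exfalso.
    assert (K : p * q * (q^3 - n * r^3) = 0).
    { replace (p * q * (q^3 - n * r^3)) with (q * q * (p^2*r + p*q^2 + n*q*r^2) - r * q * (p^2*q + n*q^2*r + n*p*r^2)) by ring.
      rewrite HB', HC'. ring. }
    apply Rmult_integral in K. destruct K as [K|K]; [apply Rmult_integral in K; destruct K; contradiction|].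
    apply Hn. exists (q / r). split. apply isQ_div; auto.
    field_simplify_eq; auto. lra.
Qed.

Lemma Lrat t n lam : t ^ 3 = n -> NC n -> (exists s, isQ s /\ lam = s ^ 3) ->
  ~ (forall y : R, Qadj t y <-> Qadj (cbrt lam) y).
Proof.
  intros Ht Hn [s [Qs Hl]] H.
  assert (Hc : cbrt lam = s) by (apply cbrt_unique; auto).
  assert (Q1 : Qadj (cbrt lam) t). { apply (proj1 (H t)). intros S0 _ h; exact h. }
  rewrite Hc in Q1. apply (theta_irr t n); auto. apply Q1; auto. apply isQ_subfield.
Qed.

Theorem lemma4p5 (a b c : Z)
  (ha : (0 < a)%Z) (hb : (0 < b)%Z) (hc : (0 < c)%Z)
  (hnc : ~ exists z : Z, (z * z * z = a * b * c)%Z) :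
  exists lam : R,
    (lam = IZR a / IZR b \/ lam = IZR b / IZR c \/ lam = IZR c / IZR a) /\
    ~ (forall y : R, Qadj (cbrt (IZR (a * b * c))) y <-> Qadj (cbrt lam) y).
Proof.
  set (n := IZR (a * b * c)). set (t := cbrt n).
  assert (Ht : t ^ 3 = n) by apply cbrt_cube.
  assert (Hn : NC n) by (apply noncube_Q; auto).
  assert (Qn : isQ n) by apply isQ_IZR.
  assert (Ha : IZR a <> 0) by (apply not_0_IZR; lia).
  assert (Hb : IZR b <> 0) by (apply not_0_IZR; lia).
  assert (Hc : IZR c <> 0) by (apply not_0_IZR; lia).
  assert (En : n = IZR a * IZR b * IZR c) by (unfold n; rewrite !mult_IZR; ring).
  destruct (Classical_Prop.classic (forall y, Qadj t y <-> Qadj (cbrt (IZR a / IZR b)) y)) as [H|H].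
  2: { exists (IZR a / IZR b). split; auto. }
  set (beta := cbrt (IZR a / IZR b)) in *.
  assert (Hb3 : beta ^ 3 = IZR a / IZR b) by apply cbrt_cube.
  assert (Sb : S t beta).
  { apply (proj2 (H beta)). intros S0 _ h; exact h. apply (S_subfield t n); auto.
    exists 0, 1, 0. repeat split; try apply isQ_0; try apply isQ_1. ring. }
  destruct (classify t n beta (IZR a / IZR b) Ht Qn Hn Sb) as [s [Qs [E|[E|E]]]]; auto.
  - apply isQ_div; auto; apply isQ_IZR.
  - exfalso. apply (Lrat t n (IZR a / IZR b) Ht Hn); auto. exists s. split; auto.
    rewrite <- Hb3, E. auto.
  - exists (IZR b / IZR c). split; auto.
    apply (Lrat t n); auto. exists (IZR b * s). split. apply isQ_mult; auto; apply isQ_IZR.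
    assert (X : s^3 * (IZR b^2 * IZR c) = 1).
    { replace (s^3 * (IZR b^2 * IZR c)) with ((s * t)^3 * (IZR b / IZR a)) by (rewrite <- Ht in En; rewrite Rpow_mult_distr, En; field; auto).
      rewrite <- E, Hb3. field; auto. }
    replace ((IZR b * s)^3) with (IZR b^3 * (s^3 * (IZR b^2 * IZR c)) / (IZR b^2 * IZR c)) by (field; auto).
    rewrite X. field; auto.
  - exists (IZR c / IZR a). split; auto.
    apply (Lrat t n); auto. exists (s * IZR b * IZR c). split. apply isQ_mult; [apply isQ_mult|]; auto; apply isQ_IZR.
    assert (X : s^3 * (IZR a * IZR b^3 * IZR c^2) = 1).
    { replace (s^3 * (IZR a * IZR b^3 * IZR c^2)) with ((s * t^2)^3 * (IZR b / IZR a)).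
      rewrite <- E, Hb3. field; auto.
      replace ((s * t^2)^3) with (s^3 * (t^3)^2) by ring. rewrite Ht, En. field; auto. }
    replace ((s * IZR b * IZR c)^3) with ((s^3 * (IZR a * IZR b^3 * IZR c^2)) * IZR c / IZR a) by (field; auto).
    rewrite X. field; auto.
Qed.
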